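(* If a topological space $X$ has a $\mathfrak{G}$-base at a point $x\in X$, then $X$ has a countable $cs^{\ast}$-network at $x$ (i.e. $X$ has countable $cs^{\ast}$-character at $x$). *)

(* Defs.v *)
From Stdlib Require Import Arith.

Set Implicit Arguments.

Record topological_space := TopSpace {
  carrier :> Type;
  is_open : (carrier -> Prop) -> Prop;
  open_full : is_open (fun _ => True);
  open_inter : forall U V, is_open U -> is_open V -> is_open (fun z => U z /\ V z);
  open_union : forall (F : (carrier -> Prop) -> Prop),
      (forall U, F U -> is_open U) -> is_open (fun z => exists U, F U /\ U z)
}.

Definition neighborhood {X : topological_space} (x : X) (N : X -> Prop) : Prop :=
  exists U, is_open X U /\ U x /\ (forall z, U z -> N z).

Definition converges {X : topological_space} (s : nat -> X) (x : X) : Prop :=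
  forall O, neighborhood x O -> exists m, forall n, m <= n -> O (s n).

Definition baire_le (a b : nat -> nat) : Prop := forall i, a i <= b i.

Definition G_base_at {X : topological_space} (x : X) (U : (nat -> nat) -> X -> Prop) : Prop :=
  (forall a, neighborhood x (U a)) /\
  (forall O, neighborhood x O -> exists a, forall z, U a z -> O z) /\
  (forall a b, baire_le a b -> forall z, U b z -> U a z).

Definition cs_star_network_at {X : topological_space} (x : X) (Nw : (X -> Prop) -> Prop) : Prop :=
  forall (s : nat -> X) (O : X -> Prop), converges s x -> neighborhood x O ->
    exists N, Nw N /\ N x /\ (forall z, N z -> O z) /\
      (forall m, exists n, m <= n /\ N (s n)).

Definition countable_cs_star_network_at {X : topological_space} (x : X) : Prop :=
  exists F : nat -> (X -> Prop), cs_star_network_at x (fun N => exists k, N = F k).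

(* Main.v *)
Require Import Defs.
From Stdlib Require Import Arith Lia Classical ClassicalEpsilon Cantor.

Definition dec (c : nat) (i : nat) : nat :=
  fst (Cantor.of_nat (Nat.iter i (fun c => snd (Cantor.of_nat c)) c)).

Lemma dec_0 a c : dec (Cantor.to_nat (a, c)) 0 = a.
Proof. exact (f_equal fst (Cantor.cancel_of_to (a, c))). Qed.

Lemma iter_shift i c :
  Nat.iter (S i) (fun c => snd (Cantor.of_nat c)) c =
  Nat.iter i (fun c => snd (Cantor.of_nat c)) (snd (Cantor.of_nat c)).
Proof.
  induction i; simpl; auto. simpl in IHi. rewrite IHi. reflexivity.
Qed.

Lemma dec_S a c i : dec (Cantor.to_nat (a, c)) (S i) = dec c i.
Proof. unfold dec. rewrite iter_shift. rewrite Cantor.cancel_of_to. reflexivity. Qed.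

Lemma dec_surj k : forall (al : nat -> nat), exists c, forall i, i < k -> dec c i = al i.
Proof.
  induction k; intros al.
  - exists 0. intros; lia.
  - destruct (IHk (fun i => al (S i))) as [c Hc].
    exists (Cantor.to_nat (al 0, c)). intros [|i] Hi.
    + apply dec_0.
    + rewrite dec_S. apply Hc. lia.
Qed.

Definition agree (k : nat) (f g : nat -> nat) := forall i, i < k -> f i = g i.

Definition D {X : topological_space} (U : (nat -> nat) -> X -> Prop) k f (z : X) :=
  forall b, agree k b f -> U b z.

Fixpoint mx (B : nat -> nat -> nat) (i j : nat) : nat :=
  match j with
  | 0 => B 0 i
  | S j => Nat.max (mx B i j) (B (S j) i)
  end.

Lemma mx_ge B i j k : k <= j -> B k i <= mx B i j.
Proof.
  induction j; intros H; simpl.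
  - assert (k = 0) by lia; subst; lia.
  - destruct (Nat.eq_dec k (S j)).
    + subst; lia.
    + specialize (IHj ltac:(lia)); lia.
Qed.

Theorem proposition4p7 (X : topological_space) (x : X) :
  (exists U : (nat -> nat) -> X -> Prop, G_base_at x U) ->
  countable_cs_star_network_at x.
Proof.
  intros [U [Hn [Hb Hm]]].
  exists (fun n => D U (fst (Cantor.of_nat n)) (dec (snd (Cantor.of_nat n)))).
  intros s O Hs HO.
  destruct (Hb O HO) as [al Hal].
  assert (Hx : forall b, U b x).
  { intro b. destruct (Hn b) as [V [_ [HV HVU]]]. auto. }
  assert (Hk : exists k, forall m, exists n, m <= n /\ D U k al (s n)).
  { apply NNPP. intros Hnot.
    assert (H : forall k, exists p : nat * (nat -> nat),
               k <= fst p /\ agree k (snd p) al /\ ~ U (snd p) (s (fst p))).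
    { intro k. apply NNPP; intro Hk1. apply Hnot. exists k. intro m.
      apply NNPP; intro Hm1. apply Hk1.
      assert (Hm2 : ~ D U k al (s (Nat.max m k))).
      { intro Hd. apply Hm1. exists (Nat.max m k). split; [apply Nat.le_max_l|exact Hd]. }
      unfold D in Hm2. apply not_all_ex_not in Hm2. destruct Hm2 as [b Hb2].
      exists (Nat.max m k, b). simpl.
      apply imply_to_and in Hb2. destruct Hb2. repeat split; auto; lia. }
    destruct (choice _ H) as [g Hg].
    set (B := fun k i => snd (g k) i).
    set (ga := fun i => Nat.max (al i) (mx B i i)).
    assert (Hge : forall k, baire_le (snd (g k)) ga).
    { intros k i. unfold ga. destruct (Hg k) as [_ [Hag _]].
      destruct (Nat.lt_ge_cases i k).
      - rewrite Hag by auto. lia.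
      - pose proof (mx_ge B i i k H0). unfold B in *. lia. }
    destruct (Hs (U ga) (Hn ga)) as [M HM].
    destruct (Hg M) as [HMle [_ HnU]].
    apply HnU. apply (Hm _ _ (Hge M)). apply HM. exact HMle. }
  destruct Hk as [k Hk].
  destruct (dec_surj k al) as [c Hc].
  assert (HD : forall z, D U k al z -> D U k (dec c) z).
  { intros z Hz b Hb'. apply Hz. intros i Hi. rewrite Hb' by auto. auto. }
  exists (D U k (dec c)). split; [|split; [|split]].
  - exists (Cantor.to_nat (k, c)). rewrite Cantor.cancel_of_to. reflexivity.
  - intros b _. apply Hx.
  - intros z Hz. apply Hal. apply Hz. intros i Hi. symmetry. auto.
  - intro m. destruct (Hk m) as [n [Hn1 Hn2]]. exists n. auto.
Qed.
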